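(* Let $G$ be a group, $\omega$ a normalized 3-cocycle, $X,Y$ $G$-sets, and $\Psi_X,\Psi_Y$ as below. Let $(F,s):\mathcal M(X,\Psi_X)\to\mathcal M(Y,\Psi_Y)$ be a $\mathrm{Vec}_G^\omega$-module functor that preserves simple objects (i.e. $F(x)$ is simple for every simple $x$). Then there exist a $G$-equivariant map $f:X\to Y$ and a map $\Lambda:G\times X\to\mathbb F^\times$ satisfying $\Lambda(h,g^{-1}\cdot x)\Lambda^{-1}(gh,x)\Lambda(g,x)=\Psi_X^{-1}(g,h,x)\Psi_Y(g,h,f(x))$ for all $g,h\in G,x\in X$, such that $(F,s)$ is isomorphic as a module functor to $F_{f,\Lambda}$.
   Context: $\mathbb F$ algebraically closed. $\mathrm{Vec}_G^\omega$: finite-dimensional $G$-graded vector spaces, simple objects $\delta^g$, $\delta^g\otimes\delta^h=\delta^{gh}$, associator $\omega(g,h,k)\mathrm{id}$. For a $G$-set $X$ and normalized $\Psi:G\times G\times X\to\mathbb F^\times$ with $\Psi(h,k,g^{-1}\cdot x)\Psi^{-1}(gh,k,x)\Psi(g,hk,x)\Psi^{-1}(g,h,x)=\omega^{-1}(g,h,k)$, $\mathcal M(X,\Psi)$ is the category of finite-dimensional $X$-graded vector spaces (simple objects $x\in X$) with $\delta^g\triangleright x=g\cdot x$ and module constraint $m_{\delta^g,\delta^h,x}=\Psi(g,h,(gh)\cdot x)\mathrm{id}$. A module functor is an $\mathbb F$-linear functor with natural isomorphism $s_{C,M}:F(C\triangleright M)\to C\triangleright F(M)$ satisfying the module pentagon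 axiom; an isomorphism of module functors is a natural isomorphism $\eta$ with $s^H_{C,M}\circ\eta_{C\triangleright M}=(\mathrm{id}_C\triangleright\eta_M)\circ s^F_{C,M}$. For $f,\Lambda$ as in the claim, $F_{f,\Lambda}$ is the module functor with $F_{f,\Lambda}(x)=f(x)$ on simple objects (extended to an $\mathbb F$-linear functor) and coherence datum $s_{\delta^g,x}=\Lambda(g,g\cdot x)\,\mathrm{id}_{g\cdot f(x)}$. *)

(* Defs.v *)
From Stdlib Require Import Classical.
From HB Require Import structures.
From mathcomp Require Import all_boot all_algebra.
Set Implicit Arguments. Unset Strict Implicit. Unset Printing Implicit Defensive.
Import GRing.Theory.
Local Open Scope ring_scope.

Record group := Group {
  gcar :> Type;
  gmul : gcar -> gcar -> gcar;
  gone : gcar;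
  ginv : gcar -> gcar;
  gmulA : forall a b c, gmul a (gmul b c) = gmul (gmul a b) c;
  gmul1g : forall a, gmul gone a = a;
  gmulVg : forall a, gmul (ginv a) a = gone }.
Arguments gmul {_} _ _.
Arguments gone {_}.
Arguments ginv {_} _.

Record gset (G : group) := GSet {
  scar :> Type;
  sact : G -> scar -> scar;
  sact1 : forall x, sact gone x = x;
  sactM : forall g h x, sact (gmul g h) x = sact g (sact h x) }.
Arguments sact {_ _} _ _.

Definition equivariant (G : group) (X Y : gset G) (f : X -> Y) :=
  forall (g : G) (x : X), f (sact g x) = sact g (f x).

Definition normalized_3cocycle (K : fieldType) (G : group)
  (omega : G -> G -> G -> K) :=
  (forall g h k, omega g h k != 0) /\
  (forall h k, omega gone h k = 1) /\ (forall g k, omega g gone k = 1) /\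
  (forall g h, omega g h gone = 1) /\
  (forall g h k l, omega h k l * omega g (gmul h k) l * omega g h k
                   = omega (gmul g h) k l * omega g h (gmul k l)).

Definition module_datum (K : fieldType) (G : group) (X : gset G)
  (omega : G -> G -> G -> K) (Psi : G -> G -> X -> K) :=
  (forall g h x, Psi g h x != 0) /\
  (forall h x, Psi gone h x = 1) /\ (forall g x, Psi g gone x = 1) /\
  (forall g h k x, Psi h k (sact (ginv g) x) * (Psi (gmul g h) k x)^-1
                   * Psi g (gmul h k) x * (Psi g h x)^-1 = (omega g h k)^-1).

(* ---------- finite-dimensional D-graded vector spaces ----------
   An object is a finite-dimensional D-graded K-vector space K^(idx)
   given with a homogeneous basis indexed by the finite type idx,
   the basis vector i having degree deg i. *)
Record gobj (D : Type) := GObj { idx : finType; deg : idx -> D }.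
Arguments idx {D} _.
Arguments deg {D} _ _.

Section Hom.
Variables (K : fieldType) (D : Type).

(* degree-preserving linear maps M -> N, as matrices (rows = target basis) *)
Record ghom (M N : gobj D) := GHom {
  hmx :> idx N -> idx M -> K;
  hmxP : forall i j, hmx i j != 0 -> deg N i = deg M j }.

Definition meq (M N : gobj D) (f g : ghom M N) := forall i j, f i j = g i j.

Lemma hid_homog (M : gobj D) (i j : idx M) :
  ((i == j)%:R : K) != 0 -> deg M i = deg M j.
Proof. by case: (eqVneq i j) => [->|_] //=; rewrite eqxx. Qed.
Definition hid (M : gobj D) : ghom M M := GHom (@hid_homog M).

Lemma hzero_homog (M N : gobj D) (i : idx N) (j : idx M) :
  (0 : K) != 0 -> deg N i = deg M j.
Proof. by rewrite eqxx. Qed.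
Definition hzero (M N : gobj D) : ghom M N := GHom (@hzero_homog M N).

Lemma comp_homog (M N P : gobj D) (g : ghom N P) (f : ghom M N) i k :
  (\sum_j g i j * f j k) != 0 -> deg P i = deg M k.
Proof.
move=> H; apply: NNPP => Hne; move/eqP: H; apply; apply: big1 => j _.
case: (eqVneq (g i j) 0) => [->|gn]; first by rewrite mul0r.
case: (eqVneq (f j k) 0) => [->|fn]; first by rewrite mulr0.
by exfalso; apply: Hne; rewrite (hmxP gn) (hmxP fn).
Qed.
Definition comp (M N P : gobj D) (g : ghom N P) (f : ghom M N) : ghom M P :=
  GHom (@comp_homog M N P g f).

Lemma hadd_homog (M N : gobj D) (f g : ghom M N) i j :
  f i j + g i j != 0 -> deg N i = deg M j.
Proof.
case: (eqVneq (f i j) 0) => [fz|fn]; last by move=> _; exact: hmxP fn.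
by rewrite fz add0r; exact: hmxP.
Qed.
Definition hadd (M N : gobj D) (f g : ghom M N) : ghom M N :=
  GHom (@hadd_homog M N f g).

Lemma hscale_homog (M N : gobj D) (a : K) (f : ghom M N) i j :
  a * f i j != 0 -> deg N i = deg M j.
Proof. by rewrite mulf_eq0 negb_or => /andP[_ ]; exact: hmxP. Qed.
Definition hscale (M N : gobj D) (a : K) (f : ghom M N) : ghom M N :=
  GHom (@hscale_homog M N a f).

Definition is_iso (M N : gobj D) (f : ghom M N) :=
  exists g : ghom N M, meq (comp g f) (hid M) /\ meq (comp f g) (hid N).
Definition is_mono (M N : gobj D) (f : ghom M N) :=
  forall (P : gobj D) (g h : ghom P M), meq (comp f g) (comp f h) -> meq g h.
Definition is_zero (M : gobj D) := meq (hid M) (hzero M M).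
Definition is_simple (M : gobj D) :=
  ~ is_zero M /\
  forall (N : gobj D) (f : ghom N M), is_mono f -> is_zero N \/ is_iso f.
End Hom.

Section Action.
Variables (K : fieldType) (G : group).

Definition otens (C D : gobj G) : gobj G :=
  @GObj G (Finite.clone (idx C * idx D)%type _)
    (fun p => gmul (deg C p.1) (deg D p.2)).

Variable X : gset G.

Definition act_obj (C : gobj G) (M : gobj X) : gobj X :=
  @GObj X (Finite.clone (idx C * idx M)%type _)
    (fun p => sact (deg C p.1) (deg M p.2)).

Lemma act_hom_homog (C C' : gobj G) (M M' : gobj X)
  (a : ghom K C C') (p : ghom K M M') (i : idx (act_obj C' M'))
  (j : idx (act_obj C M)) :
  a i.1 j.1 * p i.2 j.2 != 0 -> deg (act_obj C' M') i = deg (act_obj C M) j.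
Proof.
rewrite mulf_eq0 negb_or => /andP[an pn] /=.
by rewrite (hmxP an) (hmxP pn).
Qed.
Definition act_hom (C C' : gobj G) (M M' : gobj X)
  (a : ghom K C C') (p : ghom K M M') : ghom K (act_obj C M) (act_obj C' M') :=
  GHom (@act_hom_homog C C' M M' a p).

(* module constraint m_{C,D,M} : (C (x) D) |> M -> C |> (D |> M),
   equal to Psi(g,h,(gh).x) id on simple objects delta^g, delta^h, x *)
Definition mconstr_fun (Psi : G -> G -> X -> K) (C D : gobj G) (M : gobj X)
  (i : idx (act_obj C (act_obj D M))) (j : idx (act_obj (otens C D) M)) : K :=
  if (i.1 == j.1.1) && (i.2.1 == j.1.2) && (i.2.2 == j.2)
  then Psi (deg C i.1) (deg D i.2.1) (sact (gmul (deg C i.1) (deg D i.2.1)) (deg M i.2.2))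
  else 0.

Lemma mconstr_homog Psi C D M i j :
  @mconstr_fun Psi C D M i j != 0 ->
  deg (act_obj C (act_obj D M)) i = deg (act_obj (otens C D) M) j.
Proof.
case: i j => [c [d m]] [[c' d'] m']; rewrite /mconstr_fun /=.
case: ifP => [/andP[/andP[/eqP<- /eqP<-] /eqP<-] _ | _]; last by rewrite eqxx.
by rewrite sactM.
Qed.
Definition mconstr Psi C D M :
  ghom K (act_obj (otens C D) M) (act_obj C (act_obj D M)) :=
  GHom (@mconstr_homog Psi C D M).
End Action.

Section ModFun.
Variables (K : fieldType) (G : group) (X Y : gset G).

Definition is_linear_functor (Fo : gobj X -> gobj Y)
  (Fm : forall M N : gobj X, ghom K M N -> ghom K (Fo M) (Fo N)) :=
  (forall M N (f g : ghom K M N), meq f g -> meq (Fm _ _ f) (Fm _ _ g)) /\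
  (forall M, meq (Fm _ _ (hid K M)) (hid K (Fo M))) /\
  (forall M N P (g : ghom K N P) (f : ghom K M N),
      meq (Fm _ _ (comp g f)) (comp (Fm _ _ g) (Fm _ _ f))) /\
  (forall M N (f g : ghom K M N),
      meq (Fm _ _ (hadd f g)) (hadd (Fm _ _ f) (Fm _ _ g))) /\
  (forall M N (a : K) (f : ghom K M N),
      meq (Fm _ _ (hscale a f)) (hscale a (Fm _ _ f))).

Definition is_module_functor (PsiX : G -> G -> X -> K) (PsiY : G -> G -> Y -> K)
  (Fo : gobj X -> gobj Y)
  (Fm : forall M N : gobj X, ghom K M N -> ghom K (Fo M) (Fo N))
  (s : forall (C : gobj G) (M : gobj X), ghom K (Fo (act_obj C M)) (act_obj C (Fo M))) :=
  is_linear_functor Fm /\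
  (forall C M, is_iso (s C M)) /\
  (forall C C' M M' (a : ghom K C C') (p : ghom K M M'),
      meq (comp (s C' M') (Fm _ _ (act_hom a p))) (comp (act_hom a (Fm _ _ p)) (s C M))) /\
  (forall (C D : gobj G) (M : gobj X),
      meq (comp (act_hom (hid K C) (s D M)) (comp (s C (act_obj D M)) (Fm _ _ (mconstr PsiX C D M))))
          (comp (mconstr PsiY C D (Fo M)) (s (otens C D) M))).

Definition modfun_iso (Fo Ho : gobj X -> gobj Y)
  (Fm : forall M N : gobj X, ghom K M N -> ghom K (Fo M) (Fo N))
  (s : forall (C : gobj G) (M : gobj X), ghom K (Fo (act_obj C M)) (act_obj C (Fo M)))
  (Hm : forall M N : gobj X, ghom K M N -> ghom K (Ho M) (Ho N))
  (t : forall (C : gobj G) (M : gobj X), ghom K (Ho (act_obj C M)) (act_obj C (Ho M))) :=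
  exists eta : forall M : gobj X, ghom K (Fo M) (Ho M),
    (forall M, is_iso (eta M)) /\
    (forall M N (p : ghom K M N), meq (comp (Hm _ _ p) (eta M)) (comp (eta N) (Fm _ _ p))) /\
    (forall C M, meq (comp (t C M) (eta (act_obj C M))) (comp (act_hom (hid K C) (eta M)) (s C M))).

Variable f : X -> Y.

Definition Ffo (M : gobj X) : gobj Y := @GObj Y (idx M) (fun i => f (deg M i)).

Lemma Ffm_homog (M N : gobj X) (p : ghom K M N) i j :
  p i j != 0 -> deg (Ffo N) i = deg (Ffo M) j.
Proof. by move=> /hmxP /= ->. Qed.
Definition Ffm (M N : gobj X) (p : ghom K M N) : ghom K (Ffo M) (Ffo N) :=
  @GHom K Y (Ffo M) (Ffo N) (fun i j => p i j) (@Ffm_homog M N p).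

Variables (hf : equivariant f) (Lam : G -> X -> K).

Definition Ffs_fun (C : gobj G) (M : gobj X)
  (i : idx (act_obj C (Ffo M))) (j : idx (Ffo (act_obj C M))) : K :=
  if (i.1 == j.1) && (i.2 == j.2)
  then Lam (deg C i.1) (sact (deg C i.1) (deg M i.2)) else 0.

Lemma Ffs_homog C M i j :
  @Ffs_fun C M i j != 0 -> deg (act_obj C (Ffo M)) i = deg (Ffo (act_obj C M)) j.
Proof.
case: i j => [c m] [c' m']; rewrite /Ffs_fun /=.
case: ifP => [/andP[/eqP<- /eqP<-] _ | _]; last by rewrite eqxx.
by rewrite hf.
Qed.
(* s_{C,M} ; on simple objects s_{delta^g,x} = Lambda(g, g.x) id *)
Definition Ffs (C : gobj G) (M : gobj X) :
  ghom K (Ffo (act_obj C M)) (act_obj C (Ffo M)) := GHom (@Ffs_homog C M).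
End ModFun.

(* Main.v *)
Require Import Defs.
From HB Require Import structures.
From mathcomp Require Import all_boot all_algebra.
Set Implicit Arguments. Unset Strict Implicit. Unset Printing Implicit Defensive.
Import GRing.Theory.
Local Open Scope ring_scope.

Definition onep (T : finType) := forall a b : T, a = b.

Lemma sum_one (K : fieldType) (T : finType) (t0 : T) (F : T -> K) :
  onep T -> \sum_(i : T) F i = F t0.
Proof.
move=> h; rewrite (bigD1 t0) //= big1 ?addr0 // => i /negP; case; apply/eqP; exact: h.
Qed.

Lemma sum_kron (K : fieldType) (T : finType) (j : T) (F : T -> K) :
  \sum_(i : T) F i * (i == j)%:R = F j.
Proof.
rewrite (bigD1 j) //= eqxx mulr1 big1 ?addr0 // => i /negPf ->; by rewrite mulr0.
Qed.

Lemma sum_kron' (K : fieldType) (T : finType) (j : T) (F : T -> K) :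
  \sum_(i : T) (j == i)%:R * F i = F j.
Proof.
rewrite (bigD1 j) //= eqxx mul1r big1 ?addr0 // => i; rewrite eq_sym => /negPf ->; by rewrite mul0r.
Qed.

Lemma one_unit : onep unit. Proof. by case; case. Qed.

Lemma sum_kron2 (K : fieldType) (T : finType) (j : T) (F : T -> K) :
  \sum_(i : T) (i == j)%:R * F i = F j.
Proof.
rewrite (bigD1 j) //= eqxx mul1r big1 ?addr0 // => i /negPf ->; by rewrite mul0r.
Qed.

Lemma sum_kron3 (K : fieldType) (T : finType) (j : T) (F : T -> K) :
  \sum_(i : T) F i * (j == i)%:R = F j.
Proof.
rewrite (bigD1 j) //= eqxx mulr1 big1 ?addr0 // => i; rewrite eq_sym => /negPf ->; by rewrite mulr0.
Qed.

Lemma sum_only (K : fieldType) (T : finType) (t0 : T) (F : T -> K) :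
  (forall t, t != t0 -> F t = 0) -> \sum_(t : T) F t = F t0.
Proof. by move=> h; rewrite (bigD1 t0) //= big1 ?addr0 // => t /h. Qed.

Lemma gmulgV (G : group) (a : G) : gmul a (ginv a) = gone.
Proof.
set b := ginv a.
rewrite -[gmul a b]gmul1g -(gmulVg b) -gmulA (gmulA b a b) /b gmulVg gmul1g.
by rewrite gmulVg.
Qed.

Section Gen.
Variables (K : fieldType) (D : Type).

Lemma meq_refl (M N : gobj D) (f : ghom K M N) : meq f f.
Proof. by []. Qed.
Lemma meq_sym (M N : gobj D) (f g : ghom K M N) : meq f g -> meq g f.
Proof. by move=> h i j; rewrite h. Qed.
Lemma meq_trans (M N : gobj D) (f g h : ghom K M N) : meq f g -> meq g h -> meq f h.
Proof. by move=> h1 h2 i j; rewrite h1 h2. Qed.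

Lemma compE (M N P : gobj D) (g : ghom K N P) (f : ghom K M N) i k :
  Defs.comp g f i k = \sum_j g i j * f j k.
Proof. by []. Qed.

Lemma comp_meq (M N P : gobj D) (g g' : ghom K N P) (f f' : ghom K M N) :
  meq g g' -> meq f f' -> meq (Defs.comp g f) (Defs.comp g' f').
Proof. by move=> h1 h2 i k; rewrite !compE; apply: eq_bigr => j _; rewrite h1 h2. Qed.

Lemma compA (M N P Q : gobj D) (h : ghom K P Q) (g : ghom K N P) (f : ghom K M N) :
  meq (Defs.comp h (Defs.comp g f)) (Defs.comp (Defs.comp h g) f).
Proof.
move=> i l; rewrite !compE.
under eq_bigr => j _ do rewrite big_distrr.
rewrite exchange_big; apply: eq_bigr => k _ /=.
rewrite big_distrl; apply: eq_bigr => j _ /=; by rewrite mulrA.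
Qed.

Lemma comp1h (M N : gobj D) (f : ghom K M N) : meq (Defs.comp (hid K N) f) f.
Proof. move=> i k; rewrite compE /=; exact: sum_kron'. Qed.
Lemma comph1 (M N : gobj D) (f : ghom K M N) : meq (Defs.comp f (hid K M)) f.
Proof. move=> i k; rewrite compE /=; exact: sum_kron. Qed.

Lemma iso_cancel (M N P : gobj D) (A B : ghom K N P) (E : ghom K M N) :
  is_iso E -> meq (Defs.comp A E) (Defs.comp B E) -> meq A B.
Proof.
move=> [Ei [_ h2]] h.
apply: meq_trans (meq_sym (comph1 A)) _.
apply: meq_trans (comp_meq (meq_refl A) (meq_sym h2)) _.
apply: meq_trans (compA _ _ _) _.
apply: meq_trans (comp_meq h (meq_refl Ei)) _.
apply: meq_trans (meq_sym (compA _ _ _)) _.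
apply: meq_trans (comp_meq (meq_refl B) h2) _.
exact: comph1.
Qed.

Definition single (z : D) : gobj D := @GObj D unit (fun _ => z).

Lemma sinj_homog (M : gobj D) (i : idx M) (k : idx M) (t : idx (single (deg M i))) :
  ((k == i)%:R : K) != 0 -> deg M k = deg (single (deg M i)) t.
Proof. by case: (eqVneq k i) => [->|] //; rewrite eqxx. Qed.
Definition sinj (M : gobj D) (i : idx M) : ghom K (single (deg M i)) M :=
  GHom (@sinj_homog M i).
Lemma sproj_homog (M : gobj D) (i : idx M) (t : idx (single (deg M i))) (k : idx M) :
  ((k == i)%:R : K) != 0 -> deg (single (deg M i)) t = deg M k.
Proof. by case: (eqVneq k i) => [->|] //; rewrite eqxx. Qed.
Definition sproj (M : gobj D) (i : idx M) : ghom K M (single (deg M i)) :=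
  GHom (@sproj_homog M i).

Lemma one_single z : onep (idx (single z)). Proof. by case; case. Qed.

Lemma sum_single z (F : idx (single z) -> K) : \sum_(j : idx (single z)) F j = F tt.
Proof. exact: sum_one (@one_single z). Qed.

Lemma comp_single (M P : gobj D) z (g : ghom K (single z) P) (f : ghom K M (single z)) i k :
  Defs.comp g f i k = g i tt * f tt k.
Proof. by rewrite compE sum_single. Qed.

Lemma simple_single (M : gobj D) (i0 : idx M) : onep (idx M) -> is_simple K M.
Proof.
move=> hM; split.
  move=> /(_ i0 i0) /=; rewrite eqxx => /eqP; by rewrite oner_eq0.
move=> N f mono.
case: (pickP (fun _ : idx N => true)) => [j1 _|none]; last first.
  by left => i; have := none i.
right.
have fn1 : f i0 j1 != 0.
  apply/negP => /eqP f0.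
  have := mono _ (sinj j1) (hzero K _ _).
  have H : meq (Defs.comp f (sinj j1)) (Defs.comp f (hzero K _ _)).
    move=> i t; rewrite !compE /= sum_kron (hM i i0) f0.
    by rewrite big1 // => ? _; rewrite mulr0.
  move=> /(_ H j1 tt) /=; rewrite eqxx => /eqP; by rewrite oner_eq0.
have allj : forall j2, j2 = j1.
  move=> j2; apply/eqP/negP => /negP ne.
  pose gf (k : idx N) (t : idx (single (deg N j2))) : K :=
    - f i0 j2 * (k == j1)%:R + f i0 j1 * (k == j2)%:R.
  have gh : forall k t, gf k t != 0 -> deg N k = deg (single (deg N j2)) t.
    move=> k t; rewrite /gf /=.
    case: (eqVneq k j2) => [->//|kn2]; rewrite mulr0 addr0.
    case: (eqVneq k j1) => [->|]; last by rewrite mulr0 eqxx.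
    rewrite mulr1 oppr_eq0 => fn2.
    by rewrite -(hmxP fn1) (hmxP fn2).
  pose g := @GHom K D _ _ gf gh.
  have H : meq (Defs.comp f g) (Defs.comp f (hzero K _ _)).
    move=> i t; rewrite !compE /= [in RHS]big1; last by move=> ? _; rewrite mulr0.
    rewrite /gf /=; under eq_bigr => k _ do rewrite mulrDr !mulrA.
    rewrite big_split /= !sum_kron (hM i i0); by rewrite mulrN mulrC addrC mulrC subrr.
  have := mono _ g (hzero K _ _) H j2 tt.
  rewrite /= /gf eqxx (negPf ne) mulr0 add0r mulr1 => /eqP; by rewrite (negPf fn1).
pose rf (j : idx N) (i : idx M) : K := (f i0 j1)^-1.
have rh : forall j i, rf j i != 0 -> deg N j = deg M i.
  by move=> j i _; rewrite (allj j) (hM i i0) (hmxP fn1).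
exists (@GHom K D _ _ rf rh); split => a b; rewrite compE /= ?(sum_one i0 _ hM) .
  by rewrite /rf (allj a) (allj b) eqxx mulVf.
have oN : onep (idx N) by move=> x y; rewrite (allj x) (allj y).
by rewrite /rf (hM a i0) (hM b i0) eqxx (sum_one j1 _ oN) mulfV.
Qed.

Lemma simple_one (M : gobj D) : is_simple K M -> (exists i : idx M, true) /\ onep (idx M).
Proof.
case=> nz sub.
case: (pickP (fun _ : idx M => true)) => [i0 _|none]; last first.
  by exfalso; apply: nz => i; have := none i.
split; first by exists i0.
suff H : forall i, i = i0 by move=> a b; rewrite (H a) (H b).
move=> i; apply/eqP; apply: contraT => ne.
have mono : is_mono (sinj i0).
  move=> P g h H t p; have := H i0 p; rewrite !compE !(sum_one t _ (@one_single (deg M i0))) /=.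
  by rewrite ?eqxx !mul1r.
case: (sub _ _ mono).
  move=> /(_ tt tt) /=; rewrite ?eqxx => /eqP; by rewrite oner_eq0.
move=> [r [_ h]]; have := h i i; rewrite compE (sum_one tt _ (@one_single (deg M i0))) /=.
rewrite (negPf ne) mul0r eqxx.
by move=> /eqP; rewrite eq_sym oner_eq0.
Qed.
End Gen.


Section Act.
Variables (K : fieldType) (G : group) (Z : gset G).

Lemma sum_act (C : gobj G) (M : gobj Z) (F : idx (act_obj C M) -> K) :
  \sum_(p : idx (act_obj C M)) F p = \sum_(c : idx C) \sum_(m : idx M) F (c, m).
Proof.
rewrite (pair_bigA _ (fun c m => F (c, m))); apply: eq_bigr => [[c m]] _ //.
Qed.

Lemma one_act (C : gobj G) (M : gobj Z) :
  onep (idx C) -> onep (idx M) -> onep (idx (act_obj C M)).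
Proof. by move=> hC hM [a1 a2] [b1 b2]; rewrite (hC a1 b1) (hM a2 b2). Qed.

Lemma act_hom_meq (C C' : gobj G) (M M' : gobj Z) (a a' : ghom K C C') (p p' : ghom K M M') :
  meq a a' -> meq p p' -> meq (act_hom a p) (act_hom a' p').
Proof. by move=> h1 h2 i j /=; rewrite h1 h2. Qed.

Lemma act_hom_comp (C1 C2 C3 : gobj G) (M1 M2 M3 : gobj Z)
  (a : ghom K C2 C3) (a' : ghom K C1 C2) (p : ghom K M2 M3) (p' : ghom K M1 M2) :
  meq (act_hom (Defs.comp a a') (Defs.comp p p')) (Defs.comp (act_hom a p) (act_hom a' p')).
Proof.
move=> i j; rewrite compE sum_act /= big_distrl; apply: eq_bigr => c _ /=.
rewrite big_distrr; apply: eq_bigr => m _ /=.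
by rewrite mulrA mulrA -[_ * _ * p _ _]mulrA [_ * p _ _]mulrC !mulrA.
Qed.

Lemma act_hom_id (C : gobj G) (M : gobj Z) :
  meq (act_hom (hid K C) (hid K M)) (hid K (act_obj C M)).
Proof. by case=> c m [c' m'] /=; rewrite -natrM xpair_eqE mulnb. Qed.

Lemma mconstr_nat (Psi : G -> G -> Z -> K) (C D : gobj G) (M N : gobj Z) (q : ghom K M N) :
  meq (Defs.comp (mconstr Psi C D N) (act_hom (hid K (otens C D)) q))
      (Defs.comp (act_hom (hid K C) (act_hom (hid K D) q)) (mconstr Psi C D M)).
Proof.
case=> c [d n] [[c' d'] m]; rewrite !compE !sum_act /=.
rewrite (sum_only (t0:=(c', d'))); last first.
  by move=> t /negPf ne; rewrite big1 // => i _; rewrite ne mul0r mulr0.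
rewrite (sum_only (t0:=n)); last first.
  move=> t ne; rewrite /mconstr_fun /=.
  by rewrite [n == t]eq_sym (negPf ne) andbF mul0r.
rewrite (sum_only (t0:=c)); last first.
  by move=> t ne; rewrite big1 // => i _; rewrite eq_sym (negPf ne) !mul0r.
rewrite (sum_only (t0:=(d, m))); last first.
  case=> d0 m0 ne /=; rewrite eqxx mul1r /mconstr_fun /=.
  case: (eqVneq d d0) => [e|]; last by rewrite mul0r mul0r.
  subst d0; case: (eqVneq m0 m) => [e|ne2]; first by subst m0; rewrite eqxx in ne.
  by rewrite andbF mulr0.
rewrite /mconstr_fun /= !eqxx mul1r !andbT mul1r.
case: (eqVneq (q n m) 0) => [->|qn]; first by rewrite !mulr0 mul0r.
have e : deg N n = deg M m := hmxP qn.
by case: ifP => _; rewrite ?mulr0 ?mul0r // e mulrC.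
Qed.

Lemma sum_otens (C D : gobj G) (F : idx (otens C D) -> K) :
  \sum_(p : idx (otens C D)) F p = \sum_(c : idx C) \sum_(d : idx D) F (c, d).
Proof.
rewrite (pair_bigA _ (fun c m => F (c, m))); apply: eq_bigr => [[c m]] _ //.
Qed.
End Act.

Lemma sum_Ffo (K : fieldType) (G : group) (X Y : gset G) (f : X -> Y) (M : gobj X)
  (F : idx (Ffo f M) -> K) :
  \sum_(p : idx (Ffo f M)) F p = \sum_(p : idx M) F p.
Proof. by []. Qed.


Lemma alg_aux (K : fieldType) (a b c p q : K) :
  c != 0 -> p != 0 -> a * (b * p) = q * c -> a / c * b = p^-1 * q.
Proof.
move=> nc np E; apply: (mulIf nc); rewrite mulrAC divfK // -mulrA -E.
by rewrite mulrA [_ * p]mulrC mulKf.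
Qed.

Section Lin.
Variables (K : fieldType) (G : group) (X Y : gset G).
Variables (Fo : gobj X -> gobj Y)
  (Fm : forall M N : gobj X, ghom K M N -> ghom K (Fo M) (Fo N)).
Hypothesis hlin : is_linear_functor Fm.
Hypothesis hsimp : forall M : gobj X, is_simple K M -> is_simple K (Fo M).

Lemma Fm_meq M N (p q : ghom K M N) : meq p q -> meq (Fm p) (Fm q).
Proof. by case: hlin => h _; exact: h. Qed.
Lemma Fm_id M a b : Fm (hid K M) a b = (a == b)%:R.
Proof. by case: hlin => _ [h _]; rewrite h. Qed.
Lemma Fm_comp M N P (g : ghom K N P) (p : ghom K M N) a b :
  Fm (Defs.comp g p) a b = \sum_j Fm g a j * Fm p j b.
Proof. by case: hlin => _ [_ [h _]]; rewrite h. Qed.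
Lemma Fm_add M N (p q : ghom K M N) a b : Fm (hadd p q) a b = Fm p a b + Fm q a b.
Proof. by case: hlin => _ [_ [_ [h _]]]; rewrite h. Qed.
Lemma Fm_scale M N c (p : ghom K M N) a b : Fm (hscale c p) a b = c * Fm p a b.
Proof. by case: hlin => _ [_ [_ [_ h]]]; rewrite h. Qed.
Lemma Fm_zero M N (q : ghom K M N) a b : (forall i j, q i j = 0) -> Fm q a b = 0.
Proof.
move=> h; have e : meq q (hscale 0 q) by move=> i j /=; rewrite h mul0r.
by rewrite (Fm_meq e) Fm_scale mul0r.
Qed.

Definition hsum {D : Type} (I : Type) (l : seq I) (M N : gobj D) (F : I -> ghom K M N) : ghom K M N :=
  foldr (fun i acc => hadd (F i) acc) (hzero K M N) l.
Lemma hsumE {D : Type} (I : Type) (l : seq I) (M N : gobj D) (F : I -> ghom K M N) a b :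
  hsum l F a b = \sum_(i <- l) F i a b.
Proof. by elim: l => [|i l IH] /=; rewrite ?big_nil ?big_cons // IH. Qed.
Lemma Fm_hsum (I : Type) (l : seq I) M N (F : I -> ghom K M N) a b :
  Fm (hsum l F) a b = \sum_(i <- l) Fm (F i) a b.
Proof.
elim: l a b => [|i l IH] a b /=; rewrite ?big_nil ?big_cons.
  by rewrite Fm_zero.
by rewrite Fm_add IH.
Qed.

Lemma id_decomp (M : gobj X) :
  meq (hid K M) (hsum (index_enum (idx M)) (fun i => Defs.comp (sinj K i) (sproj K i))).
Proof.
move=> a b; rewrite hsumE /=.
under eq_bigr => i _ do rewrite (sum_one tt _ one_unit) [(b == i)]eq_sym.
by rewrite sum_kron'.
Qed.

Lemma one_Fo (M : gobj X) (i0 : idx M) : onep (idx M) ->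
  (exists v : idx (Fo M), true) /\ onep (idx (Fo M)).
Proof. move=> h; exact: simple_one (hsimp (simple_single K i0 h)). Qed.

Lemma exFS z : exists v : idx (Fo (single z)), true.
Proof. exact: (one_Fo (M := single z) tt (@one_single _ _)).1. Qed.
Lemma oneFS z : onep (idx (Fo (single z))).
Proof. exact: (one_Fo (M := single z) tt (@one_single _ _)).2. Qed.
Definition u z : idx (Fo (single z)) := xchoose (exFS z).
Definition fmap (z : X) : Y := deg (Fo (single z)) (u z).

Lemma Fm_single x y (q : ghom K (single x) (single y)) b a : Fm q b a = q tt tt.
Proof.
case: (eqVneq (q tt tt) 0) => [q0|qn].
  by rewrite q0 Fm_zero // => [[] []].
have e : y = x := hmxP qn.
subst y.
have e : meq q (hscale (q tt tt) (hid K _)) by case; case => /=; rewrite mulr1.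
by rewrite (Fm_meq e) Fm_scale Fm_id (oneFS b a) eqxx mulr1.
Qed.

Lemma Fm_decomp M N (q : ghom K M N) b a :
  Fm q b a = \sum_(i : idx M) Fm (Defs.comp q (sinj K i)) b (u (deg M i))
                               * Fm (sproj K i) (u (deg M i)) a.
Proof.
have e : meq q (hsum (index_enum _) (fun i => Defs.comp (Defs.comp q (sinj K i)) (sproj K i))).
  move=> c d; rewrite hsumE.
  under eq_bigr => i _ do rewrite comp_single compE /= sum_kron.
  by under eq_bigr => i _ do rewrite eq_sym; rewrite sum_kron.
rewrite (Fm_meq e) Fm_hsum; apply: eq_bigr => i _.
by rewrite Fm_comp (sum_one (u _) _ (@oneFS _)).
Qed.

Lemma eta_homog M (i : idx M) (k : idx (Fo M)) :
  Fm (sproj K i) (u (deg M i)) k != 0 -> deg (Ffo fmap M) i = deg (Fo M) k.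
Proof. exact: hmxP. Qed.
Definition eta M : ghom K (Fo M) (Ffo fmap M) := @GHom K Y (Fo M) (Ffo fmap M) (fun (i : idx M) k => Fm (sproj K i) (u (deg M i)) k) (@eta_homog M).
Lemma etainv_homog M (k : idx (Fo M)) (i : idx M) :
  Fm (sinj K i) k (u (deg M i)) != 0 -> deg (Fo M) k = deg (Ffo fmap M) i.
Proof. exact: hmxP. Qed.
Definition etainv M : ghom K (Ffo fmap M) (Fo M) := @GHom K Y (Ffo fmap M) (Fo M) (fun k (i : idx M) => Fm (sinj K i) k (u (deg M i))) (@etainv_homog M).

Lemma eta_iso M : is_iso (eta M).
Proof.
exists (etainv M); split => a b; rewrite compE /=.
  rewrite -Fm_id (Fm_decomp (hid K M)); apply: eq_bigr => i _.
  by rewrite (Fm_meq (comp1h _)).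
rewrite -Fm_comp Fm_single compE /=.
by rewrite sum_kron eq_sym.
Qed.

Lemma eta_nat M N (p : ghom K M N) :
  meq (Defs.comp (Ffm fmap p) (eta M)) (Defs.comp (eta N) (Fm p)).
Proof.
move=> j k; rewrite !compE /= -Fm_comp Fm_decomp; apply: eq_bigr => i _.
by rewrite Fm_single compE /= (sum_kron i) sum_kron2.
Qed.

Variables (PsiX : G -> G -> X -> K) (PsiY : G -> G -> Y -> K)
  (s : forall (C : gobj G) (M : gobj X), ghom K (Fo (act_obj C M)) (act_obj C (Fo M))).
Hypothesis hiso : forall C M, is_iso (s C M).
Hypothesis hnat : forall C C' M M' (a : ghom K C C') (p : ghom K M M'),
  meq (Defs.comp (s C' M') (Fm (act_hom a p))) (Defs.comp (act_hom a (Fm p)) (s C M)).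
Hypothesis hpent : forall (C D : gobj G) (M : gobj X),
  meq (Defs.comp (act_hom (hid K C) (s D M)) (Defs.comp (s C (act_obj D M)) (Fm (mconstr PsiX C D M))))
      (Defs.comp (mconstr PsiY C D (Fo M)) (s (otens C D) M)).

Definition Ag (g : G) (x : X) : gobj X := act_obj (single g) (single x).
Lemma oneA g x : onep (idx (Ag g x)).
Proof. exact: one_act (@one_single _ _) (@one_single _ _). Qed.
Lemma exFA g x : exists v : idx (Fo (Ag g x)), true.
Proof. exact: (one_Fo (M := Ag g x) (tt, tt) (@oneA g x)).1. Qed.
Lemma oneFA g x : onep (idx (Fo (Ag g x))).
Proof. exact: (one_Fo (M := Ag g x) (tt, tt) (@oneA g x)).2. Qed.
Definition w g x : idx (Fo (Ag g x)) := xchoose (exFA g x).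

Definition piA g x : ghom K (Ag g x) (single (sact g x)) := sproj K (M := Ag g x) (tt, tt).

Definition lamx (g : G) (x : X) : K :=
  s (single g) (single x) (tt, u x) (w g x) / Fm (piA g x) (u (sact g x)) (w g x).
Definition Lam (g : G) (y : X) : K := lamx g (sact (ginv g) y).

Lemma piA_nz g x : Fm (piA g x) (u (sact g x)) (w g x) != 0.
Proof.
have := Fm_single (Defs.comp (piA g x) (sinj K (M := Ag g x) (tt, tt))) (u (sact g x)) (u (sact g x)).
rewrite Fm_comp (sum_one (w g x) _ (@oneFA g x)) compE /=.
rewrite (sum_one (tt, tt) _ (@oneA g x)) /= mulr1 => e.
by apply/negP => /eqP h; move: e; rewrite h mul0r => /eqP; rewrite eq_sym oner_eq0.
Qed.

Lemma sA_nz g x : s (single g) (single x) (tt, u x) (w g x) != 0.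
Proof.
case: (hiso (single g) (single x)) => r [h _].
have := h (w g x) (w g x); rewrite compE /= eqxx.
rewrite (sum_one (tt, u x) _ (one_act (@one_single G g) (@oneFS x))) => e.
by apply/negP => /eqP z; move: e; rewrite z mulr0 => /eqP; rewrite eq_sym oner_eq0.
Qed.

Lemma hf : equivariant fmap.
Proof.
move=> g x.
have e1 : deg (act_obj (single g) (Fo (single x))) (tt, u x) = deg (Fo (Ag g x)) (w g x).
  exact: hmxP (sA_nz g x).
have e2 : deg (Fo (single (sact g x))) (u (sact g x)) = deg (Fo (Ag g x)) (w g x).
  exact: hmxP (piA_nz g x).
by rewrite /fmap e2 -e1.
Qed.

Lemma Lam_sact g x : Lam g (sact g x) = lamx g x.
Proof. by rewrite /Lam -sactM gmulVg sact1. Qed.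

Lemma compat C M :
  meq (Defs.comp (Ffs hf Lam C M) (eta (act_obj C M)))
      (Defs.comp (act_hom (hid K C) (eta M)) (s C M)).
Proof.
case=> c m k; rewrite !compE !sum_act.
rewrite (sum_only (t0:=c)); last first.
  move=> t ne; apply: big1 => i _; rewrite /= /Ffs_fun /=.
  by rewrite eq_sym (negPf ne) mul0r.
rewrite (sum_only (t0:=m)); last first.
  move=> t ne; rewrite /= /Ffs_fun /=.
  by rewrite eqxx [m == t]eq_sym (negPf ne) mul0r.
rewrite (sum_only (t0:=c)); last first.
  move=> t ne; apply: big1 => i _; rewrite /=.
  by rewrite eq_sym (negPf ne) !mul0r.
rewrite /= /Ffs_fun /= !eqxx /=.
have := hnat (sproj K c) (sproj K (M:=M) m) (tt, u (deg M m)) k.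
rewrite !compE (sum_one (w (deg C c) (deg M m)) _ (@oneFA (deg C c) (deg M m))) sum_act.
rewrite (sum_only (t0:=c)); last first.
  move=> t ne; apply: big1 => i _; rewrite /=.
  by rewrite (negPf ne) !mul0r.
rewrite /= eqxx => <-.
have e : meq (sproj K (M := act_obj C M) (c, m))
             (Defs.comp (piA (deg C c) (deg M m)) (act_hom (sproj K c) (sproj K (M:=M) m))).
  move=> t [c' m']; rewrite compE (sum_one (tt, tt) _ (@oneA (deg C c) (deg M m))) /=.
  by rewrite mul1r -natrM mulnb xpair_eqE.
rewrite (Fm_meq e) Fm_comp (sum_one (w (deg C c) (deg M m)) _ (@oneFA (deg C c) (deg M m))).
rewrite Lam_sact /lamx mulrA divfK //; exact: piA_nz.
Qed.

Lemma tpent C D M :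
  meq (Defs.comp (act_hom (hid K C) (Ffs hf Lam D M))
        (Defs.comp (Ffs hf Lam C (act_obj D M)) (Ffm fmap (mconstr PsiX C D M))))
      (Defs.comp (mconstr PsiY C D (Ffo fmap M)) (Ffs hf Lam (otens C D) M)).
Proof.
apply: (iso_cancel (eta_iso (act_obj (otens C D) M))).
apply: meq_trans (meq_sym (compA _ _ _)) _.
apply: meq_trans (comp_meq (meq_refl _) (meq_sym (compA _ _ _))) _.
apply: meq_trans (comp_meq (meq_refl _) (comp_meq (meq_refl _) (eta_nat _))) _.
apply: meq_trans (comp_meq (meq_refl _) (compA _ _ _)) _.
apply: meq_trans (comp_meq (meq_refl _) (comp_meq (@compat _ _) (meq_refl _))) _.
apply: meq_trans (comp_meq (meq_refl _) (meq_sym (compA _ _ _))) _.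
apply: meq_trans (compA _ _ _) _.
have h8 : meq (Defs.comp (act_hom (hid K C) (Ffs hf Lam D M)) (act_hom (hid K C) (eta (act_obj D M))))
              (Defs.comp (act_hom (hid K C) (act_hom (hid K D) (eta M))) (act_hom (hid K C) (s D M))).
  apply: meq_trans (meq_sym (act_hom_comp _ _ _ _)) _.
  apply: meq_trans (act_hom_meq (comp1h _) (@compat D M)) _.
  apply: meq_trans (act_hom_meq (meq_sym (comp1h _)) (meq_refl _)) _.
  exact: act_hom_comp.
apply: meq_trans (comp_meq h8 (meq_refl _)) _.
apply: meq_trans (meq_sym (compA _ _ _)) _.
apply: meq_trans (comp_meq (meq_refl _) (@hpent C D M)) _.
apply: meq_trans (compA _ _ _) _.
apply: meq_trans (comp_meq (meq_sym (mconstr_nat _ _)) (meq_refl _)) _.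
apply: meq_trans (meq_sym (compA _ _ _)) _.
apply: meq_trans (comp_meq (meq_refl _) (meq_sym (@compat _ _))) _.
exact: compA.
Qed.

Hypothesis hPsiX0 : forall g h x, PsiX g h x != 0.

Lemma Lam_nz g y : Lam g y != 0.
Proof. by rewrite /Lam /lamx mulf_neq0 ?invr_neq0 ?sA_nz ?piA_nz. Qed.

Lemma Lam_eq g h x :
  Lam h (sact (ginv g) x) * (Lam (gmul g h) x)^-1 * Lam g x
  = (PsiX g h x)^-1 * PsiY g h (fmap x).
Proof.
pose x0 := sact (ginv h) (sact (ginv g) x).
have := @tpent (single g) (single h) (single x0) (tt, (tt, tt)) ((tt, tt), tt).
rewrite !compE.
do ! rewrite ?sum_act ?sum_Ffo ?sum_otens ?sum_single.
rewrite !compE; do ! rewrite ?sum_act ?sum_Ffo ?sum_otens ?sum_single.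
rewrite /= /Ffs_fun /mconstr_fun /=.
have e1 : sact h x0 = sact (ginv g) x by rewrite /x0 -sactM gmulgV sact1.
have e2 : sact (gmul g h) x0 = x by rewrite sactM e1 -sactM gmulgV sact1.
have e3 : sact g (sact (ginv g) x) = x by rewrite -sactM gmulgV sact1.
rewrite e1 e2 e3 -hf e2 mul1r => E.
have nP := hPsiX0 g h x.
have nL := Lam_nz (gmul g h) x.
exact: alg_aux nL nP E.
Qed.

Lemma main_sec : exists (f : X -> Y) (hf : equivariant f) (Lam : G -> X -> K),
    (forall g x, Lam g x != 0) /\
    (forall (g h : G) (x : X),
        Lam h (sact (ginv g) x) * (Lam (gmul g h) x)^-1 * Lam g x
        = (PsiX g h x)^-1 * PsiY g h (f x)) /\
    modfun_iso Fm s (@Ffm K G X Y f) (Ffs hf Lam).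
Proof.
exists fmap, hf, Lam; split; first exact: Lam_nz.
split; first exact: Lam_eq.
exists eta; split; first exact: eta_iso.
split; first by move=> M N p; exact: eta_nat.
by move=> C M; exact: (@compat C M).
Qed.
End Lin.

Theorem lemma4p20 (K : closedFieldType) (G : group) (X Y : gset G)
  (omega : G -> G -> G -> K) (PsiX : G -> G -> X -> K) (PsiY : G -> G -> Y -> K)
  (homega : normalized_3cocycle omega)
  (hPsiX : module_datum omega PsiX) (hPsiY : module_datum omega PsiY)
  (Fo : gobj X -> gobj Y)
  (Fm : forall M N : gobj X, ghom K M N -> ghom K (Fo M) (Fo N))
  (s : forall (C : gobj G) (M : gobj X), ghom K (Fo (act_obj C M)) (act_obj C (Fo M)))
  (hF : is_module_functor PsiX PsiY Fm s)
  (hsimple : forall M : gobj X, is_simple K M -> is_simple K (Fo M)) :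
  exists (f : X -> Y) (hf : equivariant f) (Lam : G -> X -> K),
    (forall g x, Lam g x != 0) /\
    (forall (g h : G) (x : X),
        Lam h (sact (ginv g) x) * (Lam (gmul g h) x)^-1 * Lam g x
        = (PsiX g h x)^-1 * PsiY g h (f x)) /\
    modfun_iso Fm s (@Ffm K G X Y f) (Ffs hf Lam).
Proof.
case: hF => hlin [hiso [hnat hpent]].
case: hPsiX => hPsiX0 _.
by apply: main_sec.
Qed.
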